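(* For Lebesgue-almost every $x\in(0,3)$, $k_x(\varepsilon)\sim\log_{2/3}|\varepsilon|$ as $\varepsilon\to0$, i.e. $k_x(\varepsilon)/\log_{2/3}|\varepsilon|\to1$.
   Context: Let $T=T_{2/3}:[0,3]\to[0,3]$ be given by $T(x)=\frac32(x+1)$ for $0\le x<1$ and $T(x)=\frac32(x-1)$ for $1\le x\le3$ (so $T(1)=0$). For $x\in[0,3]$ and $n\ge0$ let $\delta_n(x)=\mathbb 1\{T^n(x)<1\}$. For $x\in[0,3]$ and real $\varepsilon\ne0$ with $x+\varepsilon\in[0,3]$, let $k_x(\varepsilon)=\min\{n\ge0:\delta_n(x)\neq\delta_n(x+\varepsilon)\}$. *)

(* Defs.v *)
From HB Require Import structures.
From mathcomp Require Import all_boot all_order all_algebra.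
From mathcomp Require Import all_classical all_reals all_analysis.
Set Implicit Arguments. Unset Strict Implicit. Unset Printing Implicit Defensive.
Import Order.TTheory GRing.Theory Num.Theory.
Import numFieldNormedType.Exports.
Local Open Scope ring_scope.

Definition Tmap (R : realType) (x : R) : R :=
  if x < 1 then 3 / 2 * (x + 1) else 3 / 2 * (x - 1).

Definition delta (R : realType) (n : nat) (x : R) : bool := iter n (@Tmap R) x < 1.

(* k_x(eps) = min{n : delta_n(x) <> delta_n(x+eps)}; 0 by convention if no
   such n exists (this never happens for eps <> 0 with x, x+eps in [0,3]). *)
Definition kx (R : realType) (x eps : R) : nat :=
  match pselect (exists n, delta n x != delta n (x + eps)) with
  | left h => ex_minn h
  | right _ => 0%N
  end.

(* Main.v *)
Require Import Defs.
From HB Require Import structures.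
From mathcomp Require Import all_boot all_order all_algebra.
From mathcomp Require Import all_classical all_reals all_analysis.
From mathcomp Require Import ring lra.
Import Order.TTheory GRing.Theory Num.Theory.
Import numFieldNormedType.Exports.
Local Open Scope ring_scope.
Local Open Scope classical_set_scope.
Lemma Tmap_rng (R : realType) (x : R) : 0 <= x <= 3 -> 0 <= Tmap x <= 3.
Proof.
move=> /andP[h0 h3]; rewrite /Tmap; case: ifP => h; apply/andP; split; lra.
Qed.

Lemma iter_rng (R : realType) n (x : R) : 0 <= x <= 3 -> 0 <= iter n (@Tmap R) x <= 3.
Proof. by move=> hx; elim: n => //= n IH; apply: Tmap_rng. Qed.

Lemma Tmap_same (R : realType) (x y : R) : (x < 1) = (y < 1) ->
  Tmap y - Tmap x = 3/2 * (y - x).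
Proof. by rewrite /Tmap => ->; case: ifP => _; ring. Qed.

Lemma iter_same (R : realType) n (x y : R) :
  (forall m, (m < n)%N -> delta m x = delta m y) ->
  iter n (@Tmap R) y - iter n (@Tmap R) x = (3/2) ^+ n * (y - x).
Proof.
elim: n => [|n IH] H; first by rewrite /= expr0 mul1r.
rewrite /= Tmap_same; last by rewrite -!/(delta _ _) H.
rewrite IH ?exprS ?mulrA // => m hm; apply: H; exact: ltnW.
Qed.

Lemma pow32_ge (R : realType) n : 1 + n%:R / 2 <= (3/2 : R) ^+ n.
Proof.
elim: n => [|n IH]; first by rewrite expr0; lra.
rewrite exprS -natr1.
have h : 1 <= (3/2 : R) ^+ n by rewrite exprn_ege1 //; lra.
lra.
Qed.

Lemma kx_spec (R : realType) (x eps : R) : 0 <= x <= 3 -> 0 <= x + eps <= 3 ->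
  eps != 0 ->
  (forall m, (m < kx x eps)%N -> delta m x = delta m (x + eps)) /\
  delta (kx x eps) x != delta (kx x eps) (x + eps).
Proof.
move=> hx hy e0; rewrite /kx; case: pselect => [h|h].
  case: (ex_minnP h) => k hk hmin; split => // m hm.
  apply/eqP; apply: contraTT hm => hne; rewrite -leqNgt; exact: hmin.
exfalso; apply: h.
have ea : 0 < `|eps| by rewrite normr_gt0.
pose n := Num.Def.archi_bound (6 / `|eps|).
have hn : 6 / `|eps| < n%:R by apply: archi_boundP; rewrite divr_ge0 //; lra.
apply: contrapT => hall.
have H : forall m, (m < n)%N -> delta m x = delta m (x + eps).
  move=> m _; apply/eqP; apply: contra_notT hall => hne; by exists m.
have := @iter_same R n x (x + eps) H.
have := @iter_rng R n x hx; have := @iter_rng R n _ hy.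
move: (iter n (@Tmap R) x) (iter n (@Tmap R) (x + eps)) => a b.
have := pow32_ge R n.
have hn' : 6 < n%:R * `|eps| by rewrite -ltr_pdivrMr.
rewrite addrAC subrr add0r => hp /andP[? ?] /andP[? ?] hd.
have : `|b - a| <= 3.
  rewrite ler_norml; apply/andP; split; lra.
rewrite hd normrM ger0_norm; last by apply: exprn_ge0; lra.
have : (1 + n%:R/2) * `|eps| <= (3/2) ^+ n * `|eps| by rewrite ler_pM2r.
nra.
Qed.

Lemma kx_bounds (R : realType) (x eps : R) : 0 <= x <= 3 -> 0 <= x + eps <= 3 ->
  eps != 0 ->
  (3/2) ^+ (kx x eps) * `|eps| <= 3 /\
  `|iter (kx x eps) (@Tmap R) x - 1| <= (3/2) ^+ (kx x eps) * `|eps|.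
Proof.
move=> hx hy e0; have [H hne] := @kx_spec R x eps hx hy e0.
move: hne; rewrite /delta.
have := @iter_same R _ x (x + eps) H.
have := @iter_rng R (kx x eps) x hx; have := @iter_rng R (kx x eps) _ hy.
move: (iter (kx x eps) (@Tmap R) x) (iter (kx x eps) (@Tmap R) (x + eps)) => a b.
rewrite addrAC subrr add0r => /andP[? ?] /andP[? ?] hd hne.
have hp : 0 <= (3/2 : R) ^+ kx x eps by apply: exprn_ge0; lra.
rewrite -(ger0_norm hp) -normrM -hd; split.
  rewrite ler_norml; apply/andP; split; lra.
case: (ltrP a 1) hne => ha; case: (ltrP b 1) => hb //= _.
  rewrite ger0_norm ?ler0_norm; lra.
rewrite ler0_norm ?ger0_norm; lra.
Qed.

Definition mx {R : realType} (a b : R) := if a <= b then b else a.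
Definition mn {R : realType} (a b : R) := if a <= b then a else b.
Definition lamI {R : realType} (c : R) (ab : R * R) := mx 0 (mn ab.2 3 - mx ab.1 c).
Definition pre1 {R : realType} (ab : R * R) := (mx (2/3*ab.1 - 1) 0, mn (2/3*ab.2 - 1) 1).
Definition pre2 {R : realType} (ab : R * R) := (mx (2/3*ab.1 + 1) 1, mn (2/3*ab.2 + 1) 3).

Lemma mxE1 {R : realType} (a b : R) : a <= b -> mx a b = b.
Proof. by rewrite /mx => ->. Qed.
Lemma mxE2 {R : realType} (a b : R) : b < a -> mx a b = a.
Proof. by rewrite /mx leNgt => ->. Qed.
Lemma mnE1 {R : realType} (a b : R) : a <= b -> mn a b = a.
Proof. by rewrite /mn => ->. Qed.
Lemma mnE2 {R : realType} (a b : R) : b < a -> mn a b = b.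
Proof. by rewrite /mn leNgt => ->. Qed.

Ltac noif t := match t with context[mx _ _] => fail 1 | context[mn _ _] => fail 1 | _ => idtac end.
Ltac splitmx := repeat match goal with
  | |- context[mx ?a ?b] => noif a; noif b;
      case: (leP a b) => ?; [rewrite (@mxE1 _ a b) //|rewrite (@mxE2 _ a b) //]
  | |- context[mn ?a ?b] => noif a; noif b;
      case: (leP a b) => ?; [rewrite (@mnE1 _ a b) //|rewrite (@mnE2 _ a b) //]
  end.


Lemma mx_aff {R : realType} (al be a b : R) : 0 < al ->
  mx (al * a + be) (al * b + be) = al * mx a b + be.
Proof. move=> ?; splitmx; nra. Qed.
Lemma mn_aff {R : realType} (al be a b : R) : 0 < al ->
  mn (al * a + be) (al * b + be) = al * mn a b + be.
Proof. move=> ?; splitmx; nra. Qed.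
Lemma mx0_scale {R : realType} (al x : R) : 0 < al -> mx 0 (al * x) = al * mx 0 x.
Proof. move=> ?; splitmx; nra. Qed.
Lemma mn_mn {R : realType} (u v w : R) : v <= w -> mn (mn u v) w = mn u v.
Proof. move=> ?; splitmx; lra. Qed.
Lemma mx_mx {R : realType} (u v w : R) : v <= w -> mx (mx u v) w = mx u w.
Proof. move=> ?; splitmx; lra. Qed.
Lemma mx_mx2 {R : realType} (u v w : R) : w <= v -> mx (mx u v) w = mx u v.
Proof. move=> ?; splitmx; lra. Qed.
Lemma mn_le_l {R : realType} (u v : R) : mn u v <= u.
Proof. splitmx; lra. Qed.
Lemma mx_ge_r {R : realType} (u v : R) : v <= mx u v.
Proof. splitmx; lra. Qed.
Lemma mx_ge_l {R : realType} (u v : R) : u <= mx u v.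
Proof. splitmx; lra. Qed.
Lemma mx_le {R : realType} (u v w : R) : u <= w -> v <= w -> mx u v <= w.
Proof. move=> ? ?; splitmx; lra. Qed.
Lemma mx_mono {R : realType} (u v u' v' : R) : u <= u' -> v <= v' -> mx u v <= mx u' v'.
Proof. move=> ? ?; splitmx; lra. Qed.
Lemma mn_mono {R : realType} (u v u' v' : R) : u <= u' -> v <= v' -> mn u v <= mn u' v'.
Proof. move=> ? ?; splitmx; lra. Qed.

Lemma lamI_aff {R : realType} (al be c : R) ab : 0 < al ->
  mx 0 (mn (al * ab.2 + be) (al * 3 + be) - mx (al * ab.1 + be) (al * c + be))
  = al * lamI c ab.
Proof.
move=> hal; rewrite mx_aff // mn_aff // /lamI -mx0_scale //; congr mx; ring.
Qed.

Lemma lamI1a {R : realType} (c : R) ab : 0 <= c < 1 ->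
  lamI c (pre1 ab) <= 2/3 * lamI (3/2*(c+1)) ab.
Proof.
move=> /andP[? ?]; rewrite -(@lamI_aff _ _ (-1)); last lra.
rewrite /lamI /pre1 /= mn_mn; last lra.
rewrite mx_mx //.
have -> : (2/3 * ab.2 + -1 : R) = 2/3 * ab.2 - 1 by [].
have -> : (2/3 * 3 + -1 : R) = 1 by lra.
have -> : (2/3 * ab.1 + -1 : R) = 2/3 * ab.1 - 1 by [].
have -> : (2/3 * (3/2 * (c+1)) + -1 : R) = c by field.
by [].
Qed.

Lemma lamI1b {R : realType} (c : R) ab : 1 <= c -> lamI c (pre1 ab) <= 0.
Proof.
move=> hc; rewrite /lamI /pre1 /=.
have h1 := mn_le_l (mn (2 / 3 * ab.2 - 1) 1) 3.
have h2 := mx_ge_r (mx (2 / 3 * ab.1 - 1) 0) c.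
have h3 : mn (2 / 3 * ab.2 - 1) 1 <= 1 by rewrite /mn; case: ifP => //; lra.
apply: mx_le; lra.
Qed.

Lemma lamI2a {R : realType} (c : R) ab : 0 <= c < 1 ->
  lamI c (pre2 ab) <= 2/3 * lamI 0 ab.
Proof.
move=> /andP[? ?]; rewrite -(@lamI_aff _ _ 1); last lra.
rewrite /lamI /pre2 /= mn_mn; last lra.
rewrite mx_mx2; last lra.
have -> : (2/3 * 3 + 1 : R) = 3 by lra.
have -> : (2/3 * 0 + 1 : R) = 1 by lra.
by [].
Qed.

Lemma lamI2b {R : realType} (c : R) ab : 1 <= c <= 3 ->
  lamI c (pre2 ab) <= 2/3 * lamI (3/2*(c-1)) ab.
Proof.
move=> /andP[? ?]; rewrite -(@lamI_aff _ _ 1); last lra.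
rewrite /lamI /pre2 /= mn_mn; last lra.
rewrite mx_mx //.
have -> : (2/3 * 3 + 1 : R) = 3 by lra.
have -> : (2/3 * (3/2 * (c-1)) + 1 : R) = c by field.
by [].
Qed.

Lemma lamI_ge0 {R : realType} (c : R) ab : 0 <= lamI c ab.
Proof. exact: mx_ge_l. Qed.

Lemma lamI_mono {R : realType} (c : R) ab : 0 <= c -> lamI c ab <= lamI 0 ab.
Proof.
move=> ?; rewrite /lamI; apply: mx_mono => //.
suff : mx ab.1 0 <= mx ab.1 c by lra.
exact: mx_mono.
Qed.

Definition preL {R : realType} (L : seq (R * R)) :=
  foldr (fun ab acc => pre1 ab :: pre2 ab :: acc) [::] L.
Definition lam {R : realType} (c : R) (L : seq (R * R)) := \sum_(ab <- L) lamI c ab.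
Definition cc {R : realType} n : R := iter n (@Tmap R) 0.
Definition Lam {R : realType} N (L : seq (R * R)) :=
  \sum_(n < N) (2/3 : R) ^+ n * lam (cc n) L.

Lemma lam_ge0 {R : realType} (c : R) L : 0 <= lam c L.
Proof. by apply: sumr_ge0 => ab _; apply: lamI_ge0. Qed.

Lemma lam_mono {R : realType} (c : R) L : 0 <= c -> lam c L <= lam 0 L.
Proof. by move=> hc; apply: ler_sum => ab _; apply: lamI_mono. Qed.

Lemma lam_pre {R : realType} (c : R) L : 0 <= c <= 3 ->
  lam c (preL L) <= 2/3 * lam (Tmap c) L + (if c < 1 then 2/3 * lam 0 L else 0).
Proof.
move=> /andP[c0 c3]; case: (ltrP c 1) => hc.
  rewrite /Tmap hc; elim: L => [|ab L IH]; first by rewrite /lam /= !big_nil; lra.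
  rewrite /lam /= !big_cons -!/(lam _ _).
  have h1 := @lamI1a R c ab; have h2 := @lamI2a R c ab.
  have hc' : 0 <= c < 1 by rewrite c0 hc.
  move: (h1 hc') (h2 hc') IH; lra.
rewrite /Tmap ltNge hc /= addr0; elim: L => [|ab L IH]; first by rewrite /lam /= !big_nil; lra.
rewrite /lam /= !big_cons -!/(lam _ _).
have h1 := @lamI1b R c ab hc; have h2 := @lamI2b R c ab.
have hc' : 1 <= c <= 3 by rewrite hc c3.
move: (h2 hc') IH; lra.
Qed.

Lemma cc_rng {R : realType} n : 0 <= (cc n : R) <= 3.
Proof. by apply: iter_rng; apply/andP; split; lra. Qed.

Lemma sN_eq {R : realType} N :
  \sum_(n < N) (2/3 : R) ^+ n.+1 * (if (cc n : R) < 1 then 1 else 0) + (2/3) ^+ N * (1 - cc N / 3) = 1.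
Proof.
elim: N => [|N IH]; first by rewrite big_ord0 expr0 /cc /=; lra.
rewrite big_ord_recr -[RHS]IH.
set S := \sum_(i < N) _.
rewrite /cc /= -/(cc N).
clearbody S.
rewrite /Tmap; case: ifP => _; rewrite !exprS; by field.
Qed.

Lemma sN_le1 {R : realType} N :
  \sum_(n < N) (2/3 : R) ^+ n.+1 * (if (cc n : R) < 1 then 1 else 0) <= 1.
Proof.
have := @sN_eq R N; have := @cc_rng R N => /andP[_ h3].
have : 0 <= (2/3 : R) ^+ N by apply: exprn_ge0; lra.
nra.
Qed.

Lemma Lam_pre {R : realType} N (L : seq (R * R)) : Lam N (preL L) <= Lam N.+1 L.
Proof.
rewrite /Lam big_ord_recl /= expr0 mul1r.
have H : forall i : 'I_N, (2/3 : R) ^+ i * lam (cc i) (preL L) <=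
   (2/3) ^+ i.+1 * lam (cc i.+1) L + (2/3) ^+ i.+1 * (if (cc i : R) < 1 then 1 else 0) * lam 0 L.
  move=> i; have := @lam_pre R (cc i) L (cc_rng i).
  have -> : (cc i.+1 : R) = Tmap (cc i) by [].
  have hp : 0 <= (2/3 : R) ^+ i by apply: exprn_ge0; lra.
  rewrite exprS; case: ifP => _ h; nra.
apply: le_trans (ler_sum _ (fun i _ => H i)) _.
rewrite big_split /= -mulr_suml.
have := @sN_le1 R N; have := @lam_ge0 R 0 L.
have -> : \sum_(i < N) (2/3 : R) ^+ bump 0 i * lam (Tmap (cc (0 + i))) L =
  \sum_(i < N) (2/3 : R) ^+ i.+1 * lam (Tmap (cc i)) L by [].
nra.
Qed.

Lemma Lam_iter {R : realType} j : forall N (L : seq (R * R)),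
  Lam N (iter j preL L) <= Lam (N + j) L.
Proof.
elim: j => [|j IH] N L; first by rewrite addn0.
rewrite iterS; apply: le_trans (Lam_pre _ _) _.
by rewrite addnS -addSn; apply: IH.
Qed.

Lemma geom_sum {R : realType} N : \sum_(n < N) (2/3 : R) ^+ n = 3 - 3 * (2/3) ^+ N.
Proof.
elim: N => [|N IH]; first by rewrite big_ord0 expr0; lra.
rewrite big_ord_recr /= IH exprS; lra.
Qed.

Lemma lam_iter {R : realType} j (L : seq (R * R)) :
  lam 0 (iter j preL L) <= 3 * lam 0 L.
Proof.
have -> : lam 0 (iter j preL L) = Lam 1 (iter j preL L).
  by rewrite /Lam big_ord1 expr0 mul1r.
apply: le_trans (Lam_iter _ _ _) _.
rewrite /Lam.
apply: (@le_trans _ _ (\sum_(n < 1 + j) (2/3 : R) ^+ n * lam 0 L)).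
  apply: ler_sum => i _; apply: ler_wpM2l; first by apply: exprn_ge0; lra.
  by apply: lam_mono; have /andP[] := @cc_rng R i.
rewrite -mulr_suml geom_sum.
have := @lam_ge0 R 0 L; have : 0 <= (2/3 : R) ^+ (1 + j) by apply: exprn_ge0; lra.
nra.
Qed.

Definition memL {R : realType} (L : seq (R * R)) (x : R) :=
  has (fun ab => (ab.1 <= x) && (x <= ab.2)) L.

Lemma le_mn {R : realType} (u v w : R) : w <= u -> w <= v -> w <= mn u v.
Proof. move=> ? ?; splitmx; lra. Qed.

Lemma mem_pre {R : realType} (L : seq (R * R)) (x : R) : 0 <= x <= 3 ->
  memL L (Tmap x) -> memL (preL L) x.
Proof.
move=> /andP[x0 x3]; elim: L => [//|ab L IH] /=.
case/orP => [/andP[ha hb]|/IH ->]; last by rewrite !orbT.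
move: ha hb; rewrite /Tmap; case: ifP => hx ha hb.
  apply/orP; left; rewrite /pre1 /=; apply/andP; split.
    by apply: mx_le; lra.
  by apply: le_mn; lra.
apply/orP; right; apply/orP; left; rewrite /pre2 /=; apply/andP; split.
  by apply: mx_le; lra.
by apply: le_mn; lra.
Qed.

Lemma mem_iter {R : realType} j : forall (L : seq (R * R)) (x : R), 0 <= x <= 3 ->
  memL L (iter j (@Tmap R) x) -> memL (iter j preL L) x.
Proof.
elim: j => [//|j IH] L x hx; rewrite iterSr iterS => h.
apply: mem_pre => //; apply: IH => //; exact: Tmap_rng.
Qed.

Definition Uset {R : realType} (L : seq (R * R)) : set R :=
  \big[setU/set0]_(ab <- L) [set` (`[mx ab.1 0, mn ab.2 3])%R].

Lemma Uset_meas {R : realType} (L : seq (R * R)) : measurable (Uset L).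
Proof. by apply: bigsetU_measurable => ab _; apply: measurable_itv. Qed.

Lemma Uset_mu {R : realType} (L : seq (R * R)) :
  (lebesgue_measure (Uset L) <= (lam 0 L)%:E)%E.
Proof.
elim: L => [|ab L IH]; first by rewrite /Uset /lam !big_nil measure0.
rewrite /Uset /lam !big_cons -/(Uset L) -/(lam 0 L).
apply: le_trans (measureU2 _ _ _) _; [exact: measurable_itv|exact: Uset_meas|].
rewrite EFinD; apply: leeD => //.
change (lebesgue_measure [set` (`[mx ab.1 0, mn ab.2 3])%R] <= (lamI 0 ab)%:E)%E.
rewrite lebesgue_measure_itv /= /lamI.
case: ifP => h; last by rewrite lee_fin; apply: mx_ge_l.
rewrite -EFinD lee_fin; apply: mx_ge_r.
Qed.

Lemma Uset_mem {R : realType} (L : seq (R * R)) (x : R) : 0 <= x <= 3 ->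
  memL L x -> Uset L x.
Proof.
move=> /andP[x0 x3]; elim: L => [//|ab L IH] /=.
rewrite /Uset big_cons -/(Uset L); case/orP => [/andP[ha hb]|/IH h]; last by right.
left => /=; rewrite in_itv /=; apply/andP; split.
  by apply: mx_le.
by apply: le_mn.
Qed.

Definition Uj {R : realType} j (r : R) := Uset (iter j preL [:: (1 - r, 1 + r)]).

Lemma Uj_meas {R : realType} j (r : R) : measurable (Uj j r).
Proof. exact: Uset_meas. Qed.

Lemma Uj_mu {R : realType} j (r : R) : 0 <= r ->
  (lebesgue_measure (Uj j r) <= (6 * r)%:E)%E.
Proof.
move=> r0; apply: le_trans (Uset_mu _) _; rewrite lee_fin.
apply: le_trans (lam_iter _ _) _.
rewrite /lam big_cons big_nil addr0 /lamI /=.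
suff : mx 0 (mn (1 + r) 3 - mx (1 - r) 0) <= 2 * r by lra.
apply: mx_le; first lra.
have := mn_le_l (1 + r) 3; have := mx_ge_l (1 - r) 0; lra.
Qed.

Lemma Uj_mem {R : realType} j (r x : R) : 0 <= x <= 3 ->
  `|iter j (@Tmap R) x - 1| <= r -> Uj j r x.
Proof.
move=> hx h; apply: Uset_mem => //; apply: mem_iter => //=.
move: h; rewrite ler_norml => /andP[h1 h2]; apply/orP; left; apply/andP; split; lra.
Qed.

Definition rho {R : realType} (p : nat) : R := expR (- ln (3/2) / (p.+1)%:R).

Lemma ln32_gt0 {R : realType} : 0 < ln (3/2 : R).
Proof. by apply: ln_gt0; lra. Qed.

Lemma rho_gt0 {R : realType} p : 0 < (rho p : R).
Proof. exact: expR_gt0. Qed.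

Lemma rho_lt1 {R : realType} p : (rho p : R) < 1.
Proof.
rewrite /rho expR_lt1; have := @ln32_gt0 R.
have : 0 < (p.+1)%:R :> R by rewrite ltr0n.
move=> h1 h2; rewrite mulNr oppr_lt0; exact: divr_gt0.
Qed.

Lemma geom_bound {R : realType} (q : R) n : 0 <= q < 1 ->
  \sum_(0 <= i < n) q ^+ i <= 1 / (1 - q).
Proof.
move=> /andP[q0 q1].
have H : \sum_(0 <= i < n) q ^+ i * (1 - q) = 1 - q ^+ n.
  elim: n => [|n IH]; first by rewrite big_geq // expr0; lra.
  by rewrite big_nat_recr //= IH exprS; ring.
rewrite ler_pdivlMr; last lra.
rewrite mulr_suml H.
have : 0 <= q ^+ n by apply: exprn_ge0.
lra.
Qed.

Definition Fp {R : realType} p j : set R := Uj j (rho p ^+ j).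

Lemma Fp_null {R : realType} p : lebesgue_measure (lim_sup_set (@Fp R p)) = 0%E.
Proof.
apply: lim_sup_set_cvg0; first by move=> k; apply: Uj_meas.
apply: (@le_lt_trans _ _ (\sum_(n <oo) ((6 * rho p ^+ n)%:E))%E).
  apply: lee_nneseries => // n _; apply: Uj_mu.
  by apply: exprn_ge0; apply: ltW; apply: rho_gt0.
apply: (@le_lt_trans _ _ (6 * (1 / (1 - rho p)))%:E); last by rewrite ltry.
apply: lime_le.
  by apply: is_cvg_nneseries => n _ _; rewrite lee_fin; apply: mulr_ge0 => //;
    apply: exprn_ge0; apply: ltW; apply: rho_gt0.
apply: nearW => n /=; rewrite sumEFin lee_fin -mulr_sumr.
apply: ler_wpM2l => //; apply: geom_bound.
by rewrite (ltW (rho_gt0 _)) rho_lt1.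
Qed.

Lemma U0_null {R : realType} j : lebesgue_measure (@Uj R j 0) = 0%E.
Proof.
apply/eqP; rewrite eq_le measure_ge0 andbT.
by have := @Uj_mu R j 0 (lexx _); rewrite mulr0.
Qed.

Lemma lt_mn {R : realType} {t u v : R} : t < mn u v -> t < u /\ t < v.
Proof. rewrite /mn; case: ifP => h ?; split; lra. Qed.

Lemma mn_gt0 {R : realType} (u v : R) : 0 < u -> 0 < v -> 0 < mn u v.
Proof. by rewrite /mn; case: ifP. Qed.

Lemma near_away {R : realType} (x : R) m :
  (forall j, (j < m)%N -> iter j (@Tmap R) x != 1) ->
  exists2 d : R, 0 < d & forall j (t : R), (j < m)%N -> `|t| < d ->
    (3/2) ^+ j * `|t| < `|iter j (@Tmap R) x - 1|.
Proof.
elim: m => [|m IH] H; first by exists 1 => // j t.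
have [d d0 hd] := IH (fun j hj => H j (ltnW hj)).
have hp : 0 < (3/2 : R) ^+ m by apply: exprn_gt0; lra.
have hm : 0 < `|iter m (@Tmap R) x - 1| by rewrite normr_gt0 subr_eq0 H.
exists (mn d (`|iter m (@Tmap R) x - 1| / (3/2) ^+ m)).
  by apply: mn_gt0 => //; apply: divr_gt0.
move=> j t; rewrite ltnS leq_eqVlt => /orP[/eqP ->|hj] /lt_mn[h1 h2].
  by rewrite mulrC -ltr_pdivlMr.
exact: hd.
Qed.

Lemma ratio_bound {R : realType} (K D e : R) : 0 < D -> (1 - e) * D <= K ->
  K <= (1 + e) * D -> `|1 - K / D| <= e.
Proof.
move=> D0 h1 h2.
have -> : 1 - K / D = (D - K) / D by field; rewrite gt_eqF.
rewrite normrM normfV (gtr0_norm D0) ler_pdivrMr //.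
rewrite ler_norml; apply/andP; split; lra.
Qed.

Theorem lemma6p1 (R : realType) :
  {ae (@lebesgue_measure R), forall x : R, x \in `]0, 3[ ->
    ((kx x eps)%:R / (ln `|eps| / ln (2 / 3 : R))) @[eps --> 0^'] --> (1 : R)}.
Proof.
pose Bad := (\bigcup_p lim_sup_set (@Fp R p)) `|` (\bigcup_j @Uj R j 0).
have nBad : (@lebesgue_measure R).-negligible Bad.
  apply: negligibleU; apply: negligible_bigcup => k; apply/negligibleP.
  - apply: bigcap_measurableType => n _; apply: bigcup_measurable => j _.
    exact: Uj_meas.
  - exact: Fp_null.
  - exact: Uj_meas.
  - exact: U0_null.
apply: negligibleS nBad => xx /= nP.
move: (xx : R) nP => x nP.
apply: contrapT => nB; apply: nP => hx.
have nU0 : forall j, ~ Uj j 0 x by move=> j h; apply: nB; right; exists j.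
have nF : forall p, ~ lim_sup_set (@Fp R p) x by move=> p h; apply: nB; left; exists p.
have /andP[x0 x3] : 0 < x < 3 by move: hx; rewrite in_setE /= in_itv.
have hx03 : 0 <= x <= 3 by apply/andP; split; lra.
have hne : forall j, iter j (@Tmap R) x != 1.
  move=> j; apply/negP => /eqP h; apply: (nU0 j); apply: Uj_mem => //.
  by rewrite h subrr normr0.
apply/cvgrPdist_le => e e0.
pose p := Num.Def.archi_bound (1 / e).
have hp : 1 / e < p%:R by apply: archi_boundP; rewrite divr_ge0 // ltW.
have [m hm] : exists m, forall j, (m <= j)%N -> ~ Fp p j x.
  apply: contrapT => H; apply: (nF p) => n _; apply: contrapT => H2.
  apply: H; exists n => j hj Fj; apply: H2; exists j => //.
have [d d0 hd] := @near_away R x m (fun j _ => hne j).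
pose del := mn (mn (mn x (3 - x)) (mn 1 d)) (expR (- ln 3 / e)).
have del0 : 0 < del.
  apply: mn_gt0; last exact: expR_gt0.
  apply: mn_gt0; apply: mn_gt0 => //; lra.
rewrite near_withinE; apply/nbhs_ballP; exists del => //= t ht tn0.
have ht' : `|t| < del by move: ht; rewrite /ball /= sub0r normrN.
have [h1 tE] := lt_mn ht'.
have [h2 h3] := lt_mn h1.
have [tx t3x] := lt_mn h2.
have [t1 td] := lt_mn h3.
have hy : 0 <= x + t <= 3.
  move: tx t3x; rewrite !ltr_norml => /andP[? ?] /andP[? ?]; apply/andP; split; lra.
have [hup hlow] := @kx_bounds R x t hx03 hy tn0.
set k := kx x t in hup hlow *.
have km : (m <= k)%N.
  rewrite leqNgt; apply/negP => hk; have := hd k t hk td; by rewrite ltNge hlow.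
have hrho : rho p ^+ k < `|iter k (@Tmap R) x - 1|.
  rewrite ltNge; apply/negP => h; apply: (hm k km); exact: Uj_mem.
have t0 : 0 < `|t| by rewrite normr_gt0.
have p32 : 0 < (3/2 : R) ^+ k by apply: exprn_gt0; lra.
have lnprod : ln ((3/2 : R) ^+ k * `|t|) = k%:R * ln (3/2 : R) + ln `|t|.
  rewrite lnM ?posrE //.
  rewrite lnXn; last lra.
  by rewrite -[X in X + _ = _]mulr_natl.
have lnrho : ln (rho p ^+ k : R) = k%:R * (- ln (3/2 : R) / (p.+1)%:R).
  by rewrite /rho -expRM_natl expRK.
have a0 := @ln32_gt0 R.
have lt0 : ln `|t| < 0 by apply: ln_lt0; rewrite t0 t1.
set a := ln (3/2 : R) in a0 lnprod lnrho *.
set lt := ln `|t| in lt0 lnprod *.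
have H1 : k%:R * (- a / (p.+1)%:R) < k%:R * a + lt.
  rewrite -lnrho -lnprod ltr_ln ?posrE //; last by apply: mulr_gt0 => //; apply: exprn_gt0; lra.
    exact: lt_le_trans hrho hlow.
  by apply: exprn_gt0; apply: rho_gt0.
have H2 : k%:R * a + lt <= ln 3.
  rewrite -lnprod ler_ln ?posrE //.
  apply: mulr_gt0 => //; apply: exprn_gt0; lra.
have H3 : lt < - ln 3 / e.
  by rewrite /lt -[X in _ < X]expRK ltr_ln ?posrE // expR_gt0.
have ln23 : ln (2 / 3 : R) = - a.
  have -> : (2 / 3 : R) = (3 / 2)^-1 by rewrite invf_div.
  by rewrite lnV ?posrE //; lra.
rewrite ln23.
have -> : (k%:R / (lt / - a) : R) = (k%:R * a) / (- lt).
  by field; rewrite (lt_eqF lt0) (gt_eqF a0).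
have P0 : 0 < (p.+1)%:R :> R by rewrite ltr0n.
set P := (p.+1)%:R : R in P0 H1.
have hP : P = p%:R + 1 by rewrite /P -natr1.
have H1' : - (k%:R * a) < P * (k%:R * a + lt).
  move: H1; have -> : k%:R * (- a / P) = - (k%:R * a) / P by field; rewrite gt_eqF.
  by rewrite ltr_pdivrMr // [_ * P]mulrC.
have hp' : 1 < e * (P + 1).
  move: hp; rewrite ltr_pdivrMr // => hp; nra.
have H3' : ln 3 < e * (- lt).
  move: H3; rewrite ltr_pdivlMr // => H3; nra.
apply: ratio_bound; first lra.
  set X := k%:R * a in H1' H2 *.
  have h4 : 0 < e * (P + 1) * (- lt) - (- lt) by nra.
  have h5 : (P + 1) * ((1 - e) * - lt) < (P + 1) * X by nra.
  have hP1 : 0 < P + 1 by lra.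
  by rewrite -(ler_pM2l hP1) (ltW h5).
set X := k%:R * a in H1' H2 *.
nra.
Qed.
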